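(* Let $(\mathcal S,\mathcal A,P,r)$ be any finite MDP (general/multichain) and let $(g^\star,h^\star)$ be a solution of the modified Bellman equations. Let $V^0\in\mathbb R^n$ and let $V^k=\lambda_kV^0+(1-\lambda_k)TV^{k-1}$ for $k\ge1$ with $\lambda_k=\frac{2}{k+2}$ (Anchored Value Iteration), and for each $k$ let $\pi_k$ be a greedy policy, i.e. $T^{\pi_k}V^k=TV^k$. Let $\mathcal D$ be the set of all deterministic policies, \[\epsilon=\inf_{\pi\in\mathcal D\setminus\{\pi\,:\,\mathcal P^{\pi}g^\star=g^\star\}}\|\mathcal P^{\pi}g^\star-g^\star\|_\infty\in(0,\infty]\] (with $\epsilon=+\infty$ if the index set is empty), and $K=\big(3\|r\|_\infty+12\|V^0-h^\star\|_\infty+3\|g^\star\|_\infty\big)/\epsilon$. Then for every $k>K$, \[\|g^\star-g^{\pi_k}\|_\infty\le\|TV^k-V^k-g^\star\|_\infty\le\frac{8}{k+1}\|V^0-h^\star\|_\infty+\frac{K}{k+1}\|g^\star\|_\infty.\]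
   Context: An MDP $(\mathcal S,\mathcal A,P,r)$ has finite state space $\mathcal S$ with $|\mathcal S|=n$ (functions on $\mathcal S$ are identified with vectors in $\mathbb R^n$), finite action space $\mathcal A$, transition probabilities $P(s'\mid s,a)$ and bounded reward $r$, $\|r\|_\infty=\max_{s,a}|r(s,a)|$. A policy $\pi$ assigns to each state a distribution $\pi(\cdot\mid s)$ on $\mathcal A$; $r^\pi(s)=\sum_a\pi(a\mid s)r(s,a)$, $\mathcal P^\pi(s,s')=\sum_a\pi(a\mid s)P(s'\mid s,a)$. Average reward: $g^\pi(s)=\liminf_{T\to\infty}\frac1T\mathbb E_\pi[\sum_{t=0}^{T-1}r(s_t,a_t)\mid s_0=s]$, $g^\star(s)=\max_\pi g^\pi(s)$. $T^\pi V=r^\pi+\mathcal P^\pi V$; $(TV)(s)=\max_a\{r(s,a)+\sum_{s'}P(s'\mid s,a)V(s')\}$. A pair $(g,h)$ solves the modified Bellman equations if $\max_a\sum_{s'}P(s'\mid s,a)g(s')=g(s)$ and $\max_a\{r(s,a)+\sum_{s'}P(s'\mid s,a)h(s')\}=h(s)+g(s)$ for all $s$, with some policy attaining both maxima simultaneously; solutions exist and the first component of any solution equals $g^\star$. A policy is deterministic if each $\pi(\cdot\mid s)$ is a point mass. *)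

(* Defs.v *)
From HB Require Import structures.
From mathcomp Require Import all_boot all_order all_algebra.
From mathcomp Require Import boolp classical_sets reals ereal topology normedtype sequences.
Set Implicit Arguments. Unset Strict Implicit. Unset Printing Implicit Defensive.
Import Order.TTheory GRing.Theory Num.Theory.
Local Open Scope ring_scope.

Section MDP.
Variables (R : realType) (n : nat) (A : finType).
(* transition kernel P s a s' = P(s' | s, a) and reward r s a *)
Variables (P : 'I_n -> A -> 'I_n -> R) (r : 'I_n -> A -> R).

Definition is_MDP : Prop :=
  (forall s a s', 0 <= P s a s') /\ (forall s a, \sum_(s' < n) P s a s' = 1).

Definition is_policy (pi : 'I_n -> A -> R) : Prop :=
  (forall s a, 0 <= pi s a) /\ (forall s, \sum_(a : A) pi s a = 1).

Definition is_det_policy (pi : 'I_n -> A -> R) : Prop :=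
  forall s, exists a0 : A, forall a, pi s a = (a == a0)%:R.

Definition rpi (pi : 'I_n -> A -> R) : 'cV[R]_n :=
  \col_s \sum_(a : A) pi s a * r s a.

Definition Ppi (pi : 'I_n -> A -> R) : 'M[R]_n :=
  \matrix_(s, s') \sum_(a : A) pi s a * P s a s'.

Definition Tpi (pi : 'I_n -> A -> R) (V : 'cV[R]_n) : 'cV[R]_n :=
  rpi pi + Ppi pi *m V.

(* maximum over the (nonempty) finite action set; the default value f a0 is
   itself one of the maximised values, so the result is max_a f a. *)
Definition amax (a0 : A) (f : A -> R) : R := \big[Num.max/f a0]_(a : A) f a.

Definition Topt (a0 : A) (V : 'cV[R]_n) : 'cV[R]_n :=
  \col_s amax a0 (fun a => r s a + \sum_(s' < n) P s a s' * V s' 0).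

Definition normInf (V : 'cV[R]_n) : R := \big[Num.max/0]_(s < n) `|V s 0|.
Definition rnorm : R := \big[Num.max/0]_(s < n) \big[Num.max/0]_(a : A) `|r s a|.

Definition modified_bellman (a0 : A) (g h : 'cV[R]_n) : Prop :=
  (forall s, amax a0 (fun a => \sum_(s' < n) P s a s' * g s' 0) = g s 0) /\
  (forall s, amax a0 (fun a => r s a + \sum_(s' < n) P s a s' * h s' 0)
             = h s 0 + g s 0) /\
  exists pi, is_policy pi /\ Ppi pi *m g = g /\ Tpi pi h = h + g.

(* average reward: g^pi(s) = liminf_T (1/T) E_pi[sum_{t<T} r(s_t,a_t) | s_0 = s]
   = liminf_T (1/T) sum_{t<T} ((P^pi)^t r^pi)(s) *)
Definition gpi (pi : 'I_n -> A -> R) : 'cV[R]_n :=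
  \col_s limn_inf (fun T : nat =>
     (T%:R)^-1 * \sum_(t < T) ((Ppi pi ^+ t) *m rpi pi) s 0).

Definition eps_gap (g : 'cV[R]_n) : \bar R :=
  ereal_inf [set (normInf (Ppi pi *m g - g))%:E | pi in
     [set pi | is_det_policy pi /\ Ppi pi *m g != g]].

(* K = (3||r|| + 12||V0 - h|| + 3||g||)/epsilon, with K = 0 if epsilon = +oo *)
Definition Kconst (g h V0 : 'cV[R]_n) : R :=
  let num := 3 * rnorm + 12 * normInf (V0 - h) + 3 * normInf g in
  match eps_gap g with
  | EFin e => num / e
  | _ => 0
  end.

Definition lam (k : nat) : R := 2 / (k%:R + 2).

End MDP.

(* Main.v *)
Require Import Defs.
From HB Require Import structures.
From mathcomp Require Import all_boot all_order all_algebra.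
From mathcomp Require Import boolp classical_sets reals ereal topology normedtype sequences.
From mathcomp Require Import lra ring.
Import Order.TTheory GRing.Theory Num.Theory.
Local Open Scope ring_scope.

Module B1.
Import Order.TTheory GRing.Theory Num.Theory.
Set Implicit Arguments. Unset Strict Implicit. Unset Printing Implicit Defensive.
Local Open Scope ring_scope.

Section Basics.
Variable R : realType.

Lemma amax_ge (A : finType) (a0 : A) (f : A -> R) a : f a <= amax a0 f.
Proof. exact: le_bigmax. Qed.

Lemma amax_le (A : finType) (a0 : A) (f : A -> R) c :
  (forall a, f a <= c) -> amax a0 f <= c.
Proof. by move=> H; apply: bigmax_le => // i _; apply: H. Qed.

Lemma amax_ex (A : finType) (a0 : A) (f : A -> R) : exists a, amax a0 f = f a.
Proof.
rewrite /amax; elim/big_ind: _.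
- by exists a0.
- move=> x y [a ->] [b ->]; rewrite /Num.max; case: ifP => _; by [exists b | exists a].
- by move=> a _; exists a.
Qed.

Variable n : nat.

Lemma normInf_ge0 (V : 'cV[R]_n) : 0 <= normInf V.
Proof. rewrite /normInf; elim/big_ind: _ => //= x y hx hy; by rewrite le_max hx. Qed.

Lemma normInf_ge (V : 'cV[R]_n) s : `|V s 0| <= normInf V.
Proof. exact: le_bigmax. Qed.

Lemma normInf_le (V : 'cV[R]_n) c : 0 <= c -> (forall s, `|V s 0| <= c) -> normInf V <= c.
Proof. by move=> c0 H; apply: bigmax_le => // i _; apply: H. Qed.

Lemma mxBE (U V : 'cV[R]_n) s : (U - V) s 0 = U s 0 - V s 0.
Proof. by rewrite !mxE. Qed.
Lemma mxDE (U V : 'cV[R]_n) s : (U + V) s 0 = U s 0 + V s 0.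
Proof. by rewrite !mxE. Qed.
Lemma mxZE (c : R) (U : 'cV[R]_n) s : (c *: U) s 0 = c * U s 0.
Proof. by rewrite !mxE. Qed.

Lemma mxNE (U : 'cV[R]_n) s : (- U) s 0 = - U s 0.
Proof. by rewrite !mxE. Qed.

Definition pv (p : 'I_n -> R) := (forall i, 0 <= p i) /\ \sum_i p i = 1.

Lemma pv_le (p : 'I_n -> R) (x : 'cV[R]_n) : pv p -> \sum_i p i * x i 0 <= normInf x.
Proof.
move=> [p0 p1].
apply: le_trans (_ : \sum_i p i * normInf x <= _).
  apply: ler_sum => i _; apply: ler_wpM2l => //.
  exact: le_trans (ler_norm _) (normInf_ge _ _).
by rewrite -mulr_suml p1 mul1r.
Qed.

Lemma pv_abs (p : 'I_n -> R) (x : 'cV[R]_n) : pv p -> `|\sum_i p i * x i 0| <= normInf x.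
Proof.
move=> pp; rewrite ler_norml pv_le // andbT lerNl.
have := @pv_le p (-x) pp.
have -> : normInf (-x) = normInf x.
  by rewrite /normInf; apply: eq_bigr => i _; rewrite mxE normrN.
apply: le_trans; rewrite -sumrN; apply: ler_sum => i _; rewrite mxE mulrN //.
Qed.

Lemma pv_mono (p : 'I_n -> R) (x y : 'I_n -> R) : pv p -> (forall i, x i <= y i) ->
  \sum_i p i * x i <= \sum_i p i * y i.
Proof. by move=> [p0 _] H; apply: ler_sum => i _; apply: ler_wpM2l. Qed.

End Basics.

End B1.
Import B1.

Module B2.
Import Order.TTheory GRing.Theory Num.Theory.
Set Implicit Arguments. Unset Strict Implicit. Unset Printing Implicit Defensive.
Local Open Scope ring_scope.

Section MDPfacts.
Variables (R : realType) (n : nat) (A : finType) (a0 : A).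
Variables (P : 'I_n -> A -> 'I_n -> R) (r : 'I_n -> A -> R).
Hypothesis HP : is_MDP P.

Definition Q (V : 'cV[R]_n) s a := r s a + \sum_(s' < n) P s a s' * V s' 0.
Local Notation T := (Topt P r a0).

Lemma TE V s : T V s 0 = amax a0 (Q V s).
Proof. by rewrite mxE. Qed.

Lemma pvP s a : pv (P s a).
Proof. by case: HP => h1 h2; split. Qed.

Lemma Qdiff V U s a : Q V s a - Q U s a = \sum_s' P s a s' * (V - U) s' 0.
Proof.
rewrite /Q opprD addrACA subrr add0r -sumrB; apply: eq_bigr => i _; by rewrite !mxE mulrBr.
Qed.

Lemma Q_le_T V s a : Q V s a <= T V s 0.
Proof. by rewrite TE; apply: amax_ge. Qed.

Lemma Tdiff_up V U s : exists a, T V s 0 = Q V s a /\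
  T V s 0 - T U s 0 <= \sum_s' P s a s' * (V - U) s' 0.
Proof.
have [a Ha] := amax_ex a0 (Q V s).
exists a; rewrite TE Ha; split => //.
rewrite -Qdiff lerD2l lerN2; exact: Q_le_T.
Qed.

Lemma Tne V U s : `|T V s 0 - T U s 0| <= normInf (V - U).
Proof.
rewrite ler_norml; apply/andP; split; last first.
  have [a [_ H]] := Tdiff_up V U s; apply: le_trans H _; exact: pv_le (pvP s a).
have [a [_ H]] := Tdiff_up U V s.
rewrite lerNl opprB; apply: le_trans H _.
have -> : normInf (V - U) = normInf (U - V).
  by rewrite /normInf; apply: eq_bigr => i _; rewrite !mxE distrC.
exact: pv_le (pvP s a).
Qed.

Lemma Tpi_E pi V s : Tpi P r pi V s 0 = \sum_a pi s a * Q V s a.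
Proof.
rewrite /Tpi !mxE /Q.
under [X in _ = X]eq_bigr do rewrite mulrDr.
rewrite big_split /=; congr (_ + _).
rewrite (eq_bigr (fun s' => \sum_a pi s a * P s a s' * V s' 0)); last first.
  by move=> i _; rewrite mxE mulr_suml.
rewrite exchange_big /=; apply: eq_bigr => a _; rewrite mulr_sumr.
by apply: eq_bigr => i _; rewrite mulrA.
Qed.

Lemma Ppi_E pi (x : 'cV[R]_n) s :
  (Ppi P pi *m x) s 0 = \sum_a pi s a * \sum_s' P s a s' * x s' 0.
Proof.
rewrite mxE.
rewrite (eq_bigr (fun s' => \sum_a pi s a * P s a s' * x s' 0)); last first.
  by move=> i _; rewrite mxE mulr_suml.
rewrite exchange_big /=; apply: eq_bigr => a _; rewrite mulr_sumr.
by apply: eq_bigr => i _; rewrite mulrA.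
Qed.

Lemma Ppi_pv pi s : is_policy pi -> pv (fun s' => Ppi P pi s s').
Proof.
move=> [p0 p1]; split.
  move=> i; rewrite mxE; apply: sumr_ge0 => a _; apply: mulr_ge0 => //.
  by case: HP.
rewrite (eq_bigr (fun s' => \sum_a pi s a * P s a s')); last by move=> i _; rewrite mxE.
rewrite exchange_big /= -(p1 s); apply: eq_bigr => a _.
by rewrite -mulr_sumr; case: HP => _ ->; rewrite mulr1.
Qed.

Lemma Ppi_abs pi (x : 'cV[R]_n) s : is_policy pi -> `|(Ppi P pi *m x) s 0| <= normInf x.
Proof. by move=> hp; rewrite mxE; apply: pv_abs (Ppi_pv s hp). Qed.

(* sum of nonneg weights with zero total *)
Lemma greedy_support pi V s a : is_policy pi -> Tpi P r pi V = T V ->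
  pi s a != 0 -> Q V s a = T V s 0.
Proof.
move=> [p0 p1] hg pa.
have E : \sum_b pi s b * (T V s 0 - Q V s b) = 0.
  under eq_bigr do rewrite mulrBr.
  rewrite sumrB -mulr_suml p1 mul1r -Tpi_E hg subrr //.
have Hnn : forall b, xpredT b -> 0 <= pi s b * (T V s 0 - Q V s b).
  by move=> b _; apply: mulr_ge0 => //; rewrite subr_ge0 Q_le_T.
have := psumr_eq0P Hnn E (i:=a) isT.
move/eqP; rewrite mulf_eq0 (negPf pa) /= subr_eq0 => /eqP -> //.
Qed.

Lemma exists_pos (pi : 'I_n -> A -> R) s : is_policy pi -> exists a, pi s a != 0.
Proof.
move=> [_ p1]; apply/existsP; apply: contraT; rewrite negb_exists => /forallP H.
have : \sum_a pi s a = 0 by apply: big1 => a _; apply/eqP; have := H a; rewrite negbK.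
by rewrite p1 => /eqP; rewrite oner_eq0.
Qed.

End MDPfacts.

End B2.
Import B2.

Module B3.
Import Order.TTheory GRing.Theory Num.Theory.
Set Implicit Arguments. Unset Strict Implicit. Unset Printing Implicit Defensive.
Local Open Scope ring_scope.

Section Bellman.
Variables (R : realType) (n : nat) (A : finType) (a0 : A).
Variables (P : 'I_n -> A -> 'I_n -> R) (r : 'I_n -> A -> R).
Hypothesis HP : is_MDP P.
Variables (g h : 'cV[R]_n).
Hypothesis HB : modified_bellman P r a0 g h.

Local Notation T := (Topt P r a0).
Local Notation Q := (Q P r).
Definition Pg s a := \sum_(s' < n) P s a s' * g s' 0.

Lemma avg_eq (pi : 'I_n -> A -> R) s (f : A -> R) c a : is_policy pi ->
  (forall b, f b <= c) -> \sum_b pi s b * f b = c -> pi s a != 0 -> f a = c.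
Proof.
move=> [p0 p1] hf hs pa.
have E : \sum_b pi s b * (c - f b) = 0.
  under eq_bigr do rewrite mulrBr.
  by rewrite sumrB -mulr_suml p1 mul1r hs subrr.
have Hnn : forall b, xpredT b -> 0 <= pi s b * (c - f b).
  by move=> b _; apply: mulr_ge0 => //; rewrite subr_ge0.
have := psumr_eq0P Hnn E (i:=a) isT.
by move/eqP; rewrite mulf_eq0 (negPf pa) /= subr_eq0 => /eqP ->.
Qed.

Lemma Pg_le s a : Pg s a <= g s 0.
Proof. by case: HB => H1 _; rewrite -(H1 s); apply: (amax_ge a0 (Pg s)). Qed.

Lemma Qh_le s a : Q h s a <= h s 0 + g s 0.
Proof. by case: HB => _ [H2 _]; rewrite -(H2 s); apply: (amax_ge a0 (Q h s)). Qed.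

Lemma good_action s : exists b, Pg s b = g s 0 /\ Q h s b = h s 0 + g s 0.
Proof.
case: HB => _ [_ [pi [hp [H1 H2]]]].
have [a pa] := exists_pos s hp.
exists a; split.
  apply: (avg_eq (pi:=pi) (s:=s)) => //; first exact: Pg_le.
  by move: (congr1 (fun M : 'cV[R]_n => M s 0) H1); rewrite Ppi_E.
apply: (avg_eq (pi:=pi) (s:=s)) => //; first exact: Qh_le.
by rewrite -Tpi_E H2 mxE.
Qed.

Lemma Ppi_g_le (pi : 'I_n -> A -> R) s : is_policy pi -> (Ppi P pi *m g) s 0 <= g s 0.
Proof.
move=> [p0 p1]; rewrite Ppi_E.
apply: le_trans (_ : \sum_a pi s a * g s 0 <= _).
  by apply: ler_sum => a _; apply: ler_wpM2l => //; apply: Pg_le.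
by rewrite -mulr_suml p1 mul1r.
Qed.

Lemma Q_hcg c s a : Q (h + c *: g) s a = Q h s a + c * Pg s a.
Proof.
rewrite /B2.Q /Pg -addrA; congr (_ + _).
rewrite mulr_sumr -big_split /=; apply: eq_bigr => i _.
by rewrite !mxE mulrDr mulrCA.
Qed.

Lemma TW c s : 0 <= c -> T (h + c *: g) s 0 = h s 0 + (c + 1) * g s 0.
Proof.
move=> c0; apply/eqP; rewrite eq_le; apply/andP; split.
  rewrite TE; apply: amax_le => a; rewrite Q_hcg.
  have := Qh_le s a; have := Pg_le s a => H1 H2.
  have : c * Pg s a <= c * g s 0 by apply: ler_wpM2l.
  lra.
have [b [H1 H2]] := good_action s.
apply: le_trans (Q_le_T a0 P r _ _ b); rewrite Q_hcg H1 H2; lra.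
Qed.

End Bellman.

End B3.
Import B3.

Module B4.
Import Order.TTheory GRing.Theory Num.Theory.
Set Implicit Arguments. Unset Strict Implicit. Unset Printing Implicit Defensive.
Local Open Scope ring_scope.

Lemma sum_ind (R : realType) (A : finType) (c : A) (f : A -> R) :
  \sum_a (a == c)%:R * f a = f c.
Proof.
rewrite (bigD1 c) //= eqxx mul1r big1 ?addr0 // => a /negPf ->; by rewrite mul0r.
Qed.

Section Eps.
Variables (R : realType) (n : nat) (A : finType) (a0 : A).
Variables (P : 'I_n -> A -> 'I_n -> R) (r : 'I_n -> A -> R).
Hypothesis HP : is_MDP P.
Variables (g h : 'cV[R]_n).
Hypothesis HB : modified_bellman P r a0 g h.

Local Notation Pg := (Pg P g).

Lemma det_policy (pi : 'I_n -> A -> R) : is_det_policy pi -> is_policy pi.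
Proof.
move=> hd; split=> s; have [c Hc] := hd s.
  by move=> a; rewrite Hc ler0n.
under eq_bigr do rewrite Hc.
by rewrite (bigD1 c) //= eqxx big1 ?addr0 // => a /negPf ->.
Qed.

Lemma det_Ppi (pi : 'I_n -> A -> R) s c : (forall a, pi s a = (a == c)%:R) ->
  (Ppi P pi *m g) s 0 = Pg s c.
Proof.
move=> Hc; rewrite Ppi_E; under eq_bigr do rewrite Hc.
exact: (sum_ind c (fun a => \sum_s' P s a s' * g s' 0)).
Qed.

Definition epsS : set (\bar R) := [set (normInf (Ppi P pi *m g - g))%:E | pi in
     [set pi : 'I_n -> A -> R | is_det_policy pi /\ Ppi P pi *m g != g]].

Lemma eps_dev s a : Pg s a != g s 0 -> (eps_gap P g <= (g s 0 - Pg s a)%:E)%E.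
Proof.
move=> hd.
have [bb Hbb] := fin_all_exists (fun s' => good_action HB s').
pose pi' := fun s' a' => if s' == s then (a' == a)%:R else (a' == bb s')%:R : R.
have hdet : is_det_policy pi'.
  move=> s'; rewrite /pi'; case: (s' == s); by [exists a | exists (bb s')].
have Hent : forall s', (Ppi P pi' *m g) s' 0 = if s' == s then Pg s a else g s' 0.
  move=> s'; case: (eqVneq s' s) => [->|ne].
    by apply: det_Ppi => a'; rewrite /pi' eqxx.
  rewrite (@det_Ppi pi' s' (bb s')); first by case: (Hbb s').
  by move=> a'; rewrite /pi' (negPf ne).
apply: ge_ereal_inf; exists (normInf (Ppi P pi' *m g - g))%:E.
  exists pi' => //; split => //; apply/negP => /eqP E.
  move: hd; have := Hent s; rewrite eqxx => <-; rewrite E eqxx //.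
rewrite lee_fin; apply: normInf_le.
  by rewrite subr_ge0 (Pg_le HB).
move=> s'; rewrite mxBE Hent.
case: (eqVneq s' s) => [->|ne]; first by rewrite ler0_norm ?opprB // subr_le0 (Pg_le HB).
by rewrite subrr normr0 subr_ge0 (Pg_le HB).
Qed.

Lemma eps_fin e : eps_gap P g = e%:E -> 0 < e /\ e <= 2 * normInf g.
Proof.
move=> He.
pose d := \big[Num.min/1]_s \big[Num.min/1]_(a | Pg s a != g s 0) (g s 0 - Pg s a).
have d0 : 0 < d.
  apply: lt_bigmin => // s _; apply: lt_bigmin => // a ha.
  by rewrite subr_gt0 lt_neqAle ha (Pg_le HB).
have lb : forall y, epsS y -> (d%:E <= y)%E.
  move=> _ [pi [hdet hne] <-]; rewrite lee_fin.
  have [s hs] : exists s, (Ppi P pi *m g) s 0 != g s 0.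
    apply/existsP; apply: contraNT hne; rewrite negb_exists => /forallP H.
    apply/eqP/matrixP => i j; rewrite (ord1 j); apply/eqP; have := H i; by rewrite negbK.
  have [c Hc] := hdet s.
  rewrite (det_Ppi Hc) in hs.
  apply: le_trans (_ : g s 0 - Pg s c <= _).
    apply: le_trans (bigmin_le _ s _) _.
    exact: (bigmin_le_cond _ (fun a => g s 0 - Pg s a) hs).
  apply: le_trans (normInf_ge _ s); rewrite mxBE (det_Ppi Hc).
  by rewrite distrC ler_norm.
split.
  have : (d%:E <= eps_gap P g)%E by apply/ereal_infP.
  by rewrite He lee_fin => /(lt_le_trans d0).
have : (epsS !=set0)%classic.
  apply/set0P/negP => /eqP E0; move: He; rewrite /eps_gap -/epsS E0 ereal_inf0 //.
move=> [y [pi [hdet hne] Ey]].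
have : (eps_gap P g <= (normInf (Ppi P pi *m g - g))%:E)%E.
  by apply: ge_ereal_inf; exists (normInf (Ppi P pi *m g - g))%:E => //; exists pi.
rewrite He lee_fin => /le_trans; apply; apply: normInf_le.
  by rewrite mulr_ge0 // normInf_ge0.
move=> s; rewrite mxBE.
apply: le_trans (ler_normB _ _) _; rewrite mulr2n mulrDl mul1r lerD //.
  exact: Ppi_abs (det_policy hdet).
exact: normInf_ge.
Qed.

End Eps.

End B4.
Import B4.

Module B6.
Import Order.TTheory GRing.Theory Num.Theory.
Set Implicit Arguments. Unset Strict Implicit. Unset Printing Implicit Defensive.
Local Open Scope ring_scope.
Local Open Scope classical_set_scope.

Section Liminf.
Variable R : realType.

Lemma bounded_of (w : nat -> R) C : (forall T, `|w T| <= C) -> bounded_fun (w : R^o ^nat).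
Proof.
move=> H; exists C; split; rewrite ?num_real // => x mx z _.
by apply/ltW/(le_lt_trans _ mx).
Qed.

Lemma liminf_bounds (u w z : nat -> R) lo hi C :
  (forall T, u T = w T + z T) -> (z : R^o ^nat) @ \oo --> (0 : R^o) ->
  (forall T, `|w T| <= C) -> (forall T, (1 <= T)%N -> lo <= w T <= hi) ->
  lo <= limn_inf (u : R^o ^nat) <= hi.
Proof.
move=> Huwz hz hC hb.
have bw : bounded_fun (w : R^o ^nat) := bounded_of hC.
have bz : bounded_fun (z : R^o ^nat).
  by apply: cvg_seq_bounded; apply/cvg_ex; exists 0.
have lz : limn_inf (z : R^o ^nat) = 0 := (cvg_limn_inf_sup hz).1.
pose zN := fun T => - z T.
have hzN : (zN : R^o ^nat) @ \oo --> (0 : R^o).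
  have := cvgN hz; rewrite oppr0 => H; exact: H.
have lzN : limn_inf (zN : R^o ^nat) = 0 := (cvg_limn_inf_sup hzN).1.
have bzN : bounded_fun (zN : R^o ^nat).
  by apply: cvg_seq_bounded; apply/cvg_ex; exists 0.
have ue : (u : R^o ^nat) = (w \+ z)%R by apply/funext => T; rewrite Huwz.
have we : (w : R^o ^nat) = (u \+ zN)%R.
  by apply/funext => T; rewrite /= Huwz addrK.
have bu : bounded_fun (u : R^o ^nat) by rewrite ue; apply: bounded_funD.
have lo_w : lo <= limn_inf (w : R^o ^nat).
  rewrite limn_infE //.
  apply: le_trans (_ : infs w 1 <= _).
    rewrite /infs /=; apply: lb_le_inf.
      by exists (w 1%N); exists 1%N.
    move=> _ [m /= hm <-]; by case/andP: (hb m hm).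
  apply: ub_le_sup; first exact: bounded_fun_has_ubound_infs.
  by exists 1%N.
have w_hi : limn_inf (w : R^o ^nat) <= hi.
  rewrite limn_infE //; apply: ge_sup.
    by exists (infs w 0); exists 0%N.
  move=> _ [m _ <-]; rewrite /infs /=.
  apply: le_trans (_ : w m.+1 <= _).
    apply: ge_inf; first by apply: has_lbound_sdrop; apply: bounded_fun_has_lbound.
    by exists m.+1 => //=; apply: leqnSn.
  by case/andP: (hb m.+1 isT).
apply/andP; split.
  have := le_limn_infD bw bz; rewrite -ue lz addr0 => H; exact: le_trans lo_w H.
have := le_limn_infD bu bzN; rewrite -we lzN addr0 => H.
exact: le_trans H w_hi.
Qed.

End Liminf.

End B6.
Import B6.

Module B7.
Import Order.TTheory GRing.Theory Num.Theory.
Set Implicit Arguments. Unset Strict Implicit. Unset Printing Implicit Defensive.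
Local Open Scope ring_scope.
Local Open Scope classical_set_scope.

Lemma inv_cvg0 (R : realType) (c : nat -> R) C :
  (forall T, `|c T| <= C) -> ((fun T : nat => T%:R^-1 * c T) : R^o ^nat) @ \oo --> (0 : R^o).
Proof.
move=> hC; apply/cvgr0Pnorm_le => eps eps0.
have C0 : 0 <= C by apply: le_trans (hC 0%N); apply: normr_ge0.
have hx : 0 <= C / eps by apply: divr_ge0 => //; apply: ltW.
have := truncn_itv hx => /andP[_ hN].
exists (Num.Def.trunc (C / eps)).+1 => // T /= hT.
have T0 : (0 : R) < T%:R by rewrite ltr0n; apply: leq_trans hT.
rewrite normrM ger0_norm; last by rewrite invr_ge0 ler0n.
rewrite -ler_pdivlMl ?invr_gt0 // invrK.
apply: le_trans (hC T) _.
have : C / eps < T%:R.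
  apply: lt_le_trans hN _; by rewrite ler_nat.
by rewrite ltr_pdivrMr // mulrC => /ltW.
Qed.

Section Cesaro.
Variables (R : realType) (n : nat) (A : finType) (a0 : A).
Variables (P : 'I_n -> A -> 'I_n -> R) (r : 'I_n -> A -> R).
Hypothesis HP : is_MDP P.
Variables (g : 'cV[R]_n) (pi : 'I_n -> A -> R) (Wv : 'cV[R]_n).
Hypothesis Hpol : is_policy pi.
Hypothesis Hg : Ppi P pi *m g = g.
Hypothesis Hgr : Tpi P r pi Wv = Topt P r a0 Wv.

Local Notation M := (Ppi P pi).
Local Notation T := (Topt P r a0).
Let Rv := T Wv - Wv - g.

Lemma powS t : M ^+ t.+1 = M *m M ^+ t.
Proof. by rewrite exprS mulmxE. Qed.

Lemma powSr t : M ^+ t.+1 = M ^+ t *m M.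
Proof. by rewrite exprSr mulmxE. Qed.

Lemma pw t x : normInf (M ^+ t *m x) <= normInf x.
Proof.
elim: t => [|t IH]; first by rewrite expr0 mul1mx.
rewrite powS -mulmxA; apply: normInf_le; first exact: normInf_ge0.
move=> s; apply: le_trans (Ppi_abs HP _ s Hpol) IH.
Qed.

Lemma gfix t : M ^+ t *m g = g.
Proof. elim: t => [|t IH]; first by rewrite expr0 mul1mx. by rewrite powS -mulmxA IH Hg. Qed.

Lemma rpiE : rpi r pi = Rv + g + Wv - M *m Wv.
Proof.
have : rpi r pi = Tpi P r pi Wv - M *m Wv by rewrite /Tpi addrK.
by rewrite Hgr /Rv => ->; rewrite !subrK.
Qed.

Lemma sumE_gen (X : 'cV[R]_n) s TT : rpi r pi = X + g + Wv - M *m Wv ->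
  \sum_(t < TT) (M ^+ t *m rpi r pi) s 0 =
  \sum_(t < TT) (M ^+ t *m X) s 0 + TT%:R * g s 0 + Wv s 0 - (M ^+ TT *m Wv) s 0.
Proof.
move=> rpiE.
elim: TT => [|TT IH].
  by rewrite !big_ord0 mulr0n mul0r expr0 mul1mx !add0r subrr.
rewrite !big_ord_recr /= IH rpiE.
rewrite !mulmxDr mulmxN gfix mulmxA -powSr.
rewrite !(mxBE, mxDE, mxNE) -natr1; ring.
Qed.

Lemma gpi_close : normInf (g - gpi P r pi) <= normInf Rv.
Proof.
have rho0 : 0 <= normInf Rv by apply: normInf_ge0.
apply: normInf_le => // s.
rewrite mxBE mxE.
set u := fun TT : nat => _.
pose w := fun TT : nat => TT%:R^-1 * (\sum_(t < TT) (M ^+ t *m Rv) s 0 + TT%:R * g s 0).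
pose z := fun TT : nat => TT%:R^-1 * (Wv s 0 - (M ^+ TT *m Wv) s 0).
have Huwz : forall TT, u TT = w TT + z TT.
  by move=> TT; rewrite /u /w /z (sumE_gen _ _ rpiE) -mulrDr; congr (_ * _); ring.
have hsum : forall TT, `|\sum_(t < TT) (M ^+ t *m Rv) s 0| <= TT%:R * normInf Rv.
  move=> TT; apply: le_trans (ler_norm_sum _ _ _) _.
  apply: le_trans (_ : \sum_(t < TT) normInf Rv <= _).
    apply: ler_sum => t _; apply: le_trans (normInf_ge _ s) (pw t Rv).
  by rewrite sumr_const card_ord mulr_natl.
have hz : (z : R^o ^nat) @ \oo --> (0 : R^o).
  apply: (@inv_cvg0 _ _ (normInf Wv + normInf Wv)) => TT.
  apply: le_trans (ler_normB _ _) _; apply: lerD; first exact: normInf_ge.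
  apply: le_trans (normInf_ge _ s) (pw TT Wv).
have hw1 : forall TT, (1 <= TT)%N ->
    w TT = TT%:R^-1 * \sum_(t < TT) (M ^+ t *m Rv) s 0 + g s 0.
  move=> TT hT; rewrite /w mulrDr mulrA mulVf ?mul1r //.
  by rewrite pnatr_eq0 -lt0n.
have hwb : forall TT, (1 <= TT)%N -> `|TT%:R^-1 * \sum_(t < TT) (M ^+ t *m Rv) s 0| <= normInf Rv.
  move=> TT hT; have T0 : (0 : R) < TT%:R by rewrite ltr0n.
  rewrite normrM ger0_norm ?invr_ge0 ?ler0n // ler_pdivrMl //.
have hC : forall TT, `|w TT| <= normInf Rv + `|g s 0|.
  case=> [|TT].
    rewrite /w mulr0n invr0 mul0r normr0; apply: addr_ge0 => //.
  rewrite hw1 //; apply: le_trans (ler_normD _ _) _; apply: lerD => //; exact: hwb.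
have hb : forall TT, (1 <= TT)%N -> g s 0 - normInf Rv <= w TT <= g s 0 + normInf Rv.
  move=> TT hT; rewrite hw1 //; have := hwb TT hT; rewrite ler_norml => /andP[h1 h2].
  apply/andP; split; lra.
have := liminf_bounds Huwz hz hC hb => /andP[h1 h2].
rewrite ler_norml; apply/andP; split; lra.
Qed.

End Cesaro.

End B7.
Import B7.

Module B5.
Import Order.TTheory GRing.Theory Num.Theory.
Set Implicit Arguments. Unset Strict Implicit. Unset Printing Implicit Defensive.
Local Open Scope ring_scope.

Lemma arith1 (R : realFieldType) (K u j : R) : 0 <= u -> 2 * u + 3/2 <= K -> K < j + 1 -> 0 <= j ->
  2/3 * (j+1) * (u+3) * (u+4) <= K * (j+3)^+2.
Proof.
move=> u0 h1 h2 j0.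
have K0 : 0 <= K by lra.
have h3 : K * (K + 4) <= K * (j + 5) by apply: ler_wpM2l => //; lra.
have h4 : (2 * u + 3/2) * (2 * u + 3/2 + 4) <= K * (K + 4).
  by apply: ler_pM; lra.
have uu : 0 <= u * u by apply: mulr_ge0.
have h5 : 2/3 * (u+3) * (u+4) <= K * (j + 5) by lra.
have h6 : (j + 1) * (2/3 * (u+3) * (u+4)) <= (j + 1) * (K * (j + 5)).
  by apply: ler_wpM2l => //; lra.
have Kj : 0 <= K * j by apply: mulr_ge0.
rewrite expr2; lra.
Qed.

Section AVI.
Variables (R : realType) (n : nat) (A : finType) (a0 : A).
Variables (P : 'I_n -> A -> 'I_n -> R) (r : 'I_n -> A -> R).
Hypothesis HP : is_MDP P.
Variables (g h : 'cV[R]_n).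
Hypothesis HB : modified_bellman P r a0 g h.
Variable V : nat -> 'cV[R]_n.
Hypothesis HV : forall k, V k.+1 = lam R k.+1 *: V 0%N
                      + (1 - lam R k.+1) *: Topt P r a0 (V k).

Local Notation T := (Topt P r a0).
Local Notation Pg := (Pg P g).

Definition cc (k : nat) : R := k%:R / 3.
Definition W k : 'cV[R]_n := h + cc k *: g.
Definition E k : 'cV[R]_n := V k - W k.
Definition Dd k s : R := T (V k) s 0 - T (W k) s 0.
Definition e := normInf (V 0%N - h).

Lemma e_ge0 : 0 <= e. Proof. exact: normInf_ge0. Qed.

Lemma cc_ge0 k : 0 <= cc k.
Proof. by rewrite /cc divr_ge0 // ler0n. Qed.

Lemma E_ent k s : E k s 0 = V k s 0 - h s 0 - cc k * g s 0.
Proof. by rewrite /E /W !mxE opprD addrA. Qed.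

Lemma TW_ent k s : T (W k) s 0 = h s 0 + (cc k + 1) * g s 0.
Proof. exact: TW HB _ _ (cc_ge0 k). Qed.

Lemma Dd_ent k s : Dd k s = T (V k) s 0 - h s 0 - (cc k + 1) * g s 0.
Proof. by rewrite /Dd TW_ent opprD addrA. Qed.

Lemma Vrec_ent k s : V k.+1 s 0 = (2 * V 0%N s 0 + (k%:R + 1) * T (V k) s 0) / (k%:R + 3).
Proof.
have k0 : (0 : R) <= k%:R by rewrite ler0n.
rewrite HV !mxE /lam -natr1; field; lra.
Qed.

Lemma E0_ent s : E 0 s 0 = V 0%N s 0 - h s 0.
Proof. by rewrite E_ent /cc mul0r mul0r subr0. Qed.

Lemma E0_norm : normInf (E 0) = e.
Proof. by rewrite /e /E /W /cc mul0r scale0r addr0. Qed.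

Lemma Erec k s : (k%:R + 3) * E k.+1 s 0 = 2 * E 0 s 0 + (k%:R + 1) * Dd k s.
Proof.
have k0 : (0 : R) <= k%:R by rewrite ler0n.
rewrite E_ent Vrec_ent E0_ent Dd_ent /cc -natr1; field; lra.
Qed.

Lemma Dd_abs k s : `|Dd k s| <= normInf (E k).
Proof. exact: Tne. Qed.

Lemma E_bound k : normInf (E k) <= e.
Proof.
elim: k => [|k IH]; first by rewrite E0_norm.
apply: normInf_le; first exact: e_ge0.
move=> s.
have k0 : (0 : R) <= k%:R by rewrite ler0n.
have H := Erec k s.
have H1 : `|E 0 s 0| <= e by rewrite -E0_norm normInf_ge.
have H2 : `|Dd k s| <= e by apply: le_trans (Dd_abs _ _) IH.
have : (k%:R + 3) * `|E k.+1 s 0| <= (k%:R + 3) * e.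
  rewrite -[X in X * `|_|]ger0_norm; last lra.
  rewrite -normrM H; apply: le_trans (ler_normD _ _) _.
  rewrite (normrM 2) (normrM (k%:R + 1)) (ger0_norm (x := 2)) // (ger0_norm (x := k%:R + 1)); last lra.
  have : (k%:R + 1) * `|Dd k s| <= (k%:R + 1) * e by apply: ler_wpM2l => //; lra.
  lra.
by rewrite ler_pM2l //; lra.
Qed.

Lemma Dd_bound k s : `|Dd k s| <= e.
Proof. exact: le_trans (Dd_abs _ _) (E_bound k). Qed.

Lemma E_abs k s : `|E k s 0| <= e.
Proof. exact: le_trans (normInf_ge _ _) (E_bound k). Qed.


Local Notation Q := (B2.Q P r).

Definition good j := forall s a, Q (V j) s a = T (V j) s 0 -> Pg s a = g s 0.

Lemma QVW j s a : Q (V j) s a = Q h s a + cc j * Pg s a + \sum_s' P s a s' * E j s' 0.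
Proof.
have := Qdiff P r (V j) (W j) s a; rewrite -/(E j) /W Q_hcg => <-.
by rewrite addrC subrK.
Qed.

Lemma greedy_good j :
  (forall s a, Pg s a != g s 0 -> 2 * e < cc j * (g s 0 - Pg s a)) -> good j.
Proof.
move=> H s a hq; apply/eqP; apply: contraT => hd.
have hlt := H s a hd; rewrite mulrBr in hlt.
have [b [hb1 hb2]] := good_action HB s.
have h1 := Q_le_T a0 P r (V j) s b.
rewrite -hq !QVW hb1 hb2 in h1.
have h2 := Qh_le HB s a.
have h3 : \sum_s' P s a s' * E j s' 0 <= e.
  exact: le_trans (pv_le _ (pvP HP s a)) (E_bound j).
have h4 : - e <= \sum_s' P s b s' * E j s' 0.
  have := le_trans (pv_abs _ (pvP HP s b)) (E_bound j).
  by rewrite ler_norml => /andP[].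
lra.
Qed.

Lemma V_ent k s : V k s 0 = E k s 0 + h s 0 + cc k * g s 0.
Proof. rewrite E_ent; ring. Qed.

Lemma sumP_split s a k : \sum_s' P s a s' * (V k.+1 - V k) s' 0
  = \sum_s' P s a s' * (E k.+1 - E k) s' 0 + Pg s a / 3.
Proof.
rewrite /B3.Pg mulr_suml -big_split /=; apply: eq_bigr => i _.
rewrite (mxBE (V k.+1)) (mxBE (E k.+1)) !E_ent /cc -natr1; ring.
Qed.

Lemma sumP_neg s a (U : 'cV[R]_n) (X : 'cV[R]_n) :
  \sum_s' P s a s' * (U - X) s' 0 = - \sum_s' P s a s' * (X - U) s' 0.
Proof. rewrite -sumrN; apply: eq_bigr => i _; rewrite (mxBE U) (mxBE X); ring. Qed.

Lemma Dd_diff k s : Dd k.+1 s - Dd k s = T (V k.+1) s 0 - T (V k) s 0 - g s 0 / 3.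
Proof. rewrite !Dd_ent /cc -natr1; ring. Qed.

Lemma Dd_diff_up k s : Dd k.+1 s - Dd k s <= normInf (E k.+1 - E k).
Proof.
rewrite Dd_diff.
have [a [_ H]] := Tdiff_up a0 P r (V k.+1) (V k) s.
rewrite sumP_split in H.
have h1 := pv_le (E k.+1 - E k) (pvP HP s a).
have h2 := Pg_le HB s a.
lra.
Qed.

Lemma Dd_diff_lo k s : good k -> - normInf (E k.+1 - E k) <= Dd k.+1 s - Dd k s.
Proof.
move=> gk; rewrite Dd_diff.
have [a [Ha H]] := Tdiff_up a0 P r (V k) (V k.+1) s.
rewrite sumP_neg sumP_split (gk s a (esym Ha)) in H.
have := pv_abs (E k.+1 - E k) (pvP HP s a); rewrite ler_norml => /andP[h1 h2].
lra.
Qed.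

Lemma Dd_diff_good k s : good k -> `|Dd k.+1 s - Dd k s| <= normInf (E k.+1 - E k).
Proof. by move=> gk; rewrite ler_norml Dd_diff_up Dd_diff_lo. Qed.

Lemma Dd_diff_crude k s : `|Dd k.+1 s - Dd k s| <= 2 * e.
Proof.
apply: le_trans (ler_normB _ _) _.
have := Dd_bound k.+1 s; have := Dd_bound k s; lra.
Qed.

Lemma G1_ent s : 3 * (V 1 - V 0%N) s 0 = Dd 0 s - E 0 s 0 + g s 0.
Proof.
rewrite (mxBE (V 1)) Vrec_ent Dd_ent E0_ent /cc mul0r; by field.
Qed.

Lemma Grec_ent j s : (j%:R + 3) * (j%:R + 4) * (V j.+2 - V j.+1) s 0 =
  - 2 * (E 0 s 0 - Dd j s - (cc j + 1) * g s 0)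
  + (j%:R + 2) * (j%:R + 3) * (T (V j.+1) s 0 - T (V j) s 0).
Proof.
have k0 : (0 : R) <= j%:R by rewrite ler0n.
rewrite mxBE !Vrec_ent E0_ent Dd_ent /cc -!natr1; field; lra.
Qed.

Lemma normg_ge0 : 0 <= normInf g. Proof. exact: normInf_ge0. Qed.

Lemma G_bound j : (j%:R + 2) * (j%:R + 3) * normInf (V j.+1 - V j)
   <= 4 * (j%:R + 1) * e + (j%:R + 2) * (j%:R + 3) / 3 * normInf g.
Proof.
have e0 := e_ge0; have g0 := normg_ge0.
elim: j => [|j IH].
  have : normInf (V 1 - V 0%N) <= (2 * e + normInf g) / 3.
    apply: normInf_le; first by apply: divr_ge0; lra.
    move=> s; have H := G1_ent s.
    have := E_abs 0 s; have := Dd_bound 0 s; have := normInf_ge g s.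
    rewrite !ler_norml => /andP[h1 h2] /andP[h3 h4] /andP[h5 h6].
    apply/andP; split; lra.
  lra.
have j0 : (0 : R) <= j%:R by rewrite ler0n.
rewrite -natr1.
set N1 := normInf (V j.+1 - V j) in IH.
have : normInf (V j.+2 - V j.+1) <=
   (4 * e + 2 * (j%:R + 3) / 3 * normInf g + (j%:R + 2) * (j%:R + 3) * N1)
     / ((j%:R + 3) * (j%:R + 4)).
  apply: normInf_le.
    apply: divr_ge0; last by apply: mulr_ge0; lra.
    have : 0 <= N1 by apply: normInf_ge0.
    move=> hN; have : 0 <= (j%:R + 2) * (j%:R + 3) * N1 by apply: mulr_ge0 => //; nra.
    have : 0 <= 2 * (j%:R + 3) / 3 * normInf g by apply: mulr_ge0 => //; apply: divr_ge0; lra.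
    lra.
  move=> s; rewrite ler_pdivlMr; last by apply: mulr_gt0; lra.
  rewrite -[X in `|_| * X]ger0_norm; last by apply: mulr_ge0; lra.
  rewrite -normrM mulrC Grec_ent.
  apply: le_trans (ler_normD _ _) _.
  have t1 := Tne a0 r HP (V j.+1) (V j) s.
  have hD := Dd_bound j s; have hE := E_abs 0 s; have hg := normInf_ge g s.
  rewrite !normrM.
  have -> : `|- 2 : R| = 2 by rewrite normrN ger0_norm.
  rewrite (ger0_norm (x := j%:R + 2)); last by lra.
  rewrite (ger0_norm (x := j%:R + 3)); last by lra.
  have : `|E 0 s 0 - Dd j s - (cc j + 1) * g s 0| <= 2 * e + (j%:R + 3) / 3 * normInf g.
    apply: le_trans (ler_normB _ _) _; apply: le_trans (lerD (ler_normB _ _) (lexx _)) _.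
    rewrite normrM (ger0_norm (x := cc j + 1)); last by have := cc_ge0 j; lra.
    have -> : cc j + 1 = (j%:R + 3) / 3 by rewrite /cc; field.
    have : (j%:R + 3) / 3 * `|g s 0| <= (j%:R + 3) / 3 * normInf g.
      by apply: ler_wpM2l => //; apply: divr_ge0; lra.
    lra.
  move=> h1.
  have : (j%:R + 2) * (j%:R + 3) * `|T (V j.+1) s 0 - T (V j) s 0| <= (j%:R + 2) * (j%:R + 3) * N1.
    by apply: ler_wpM2l => //; nra.
  lra.
move=> H.
have pos : (0 : R) < (j%:R + 3) * (j%:R + 4) by apply: mulr_gt0; lra.
rewrite ler_pdivlMr // in H.
lra.
Qed.


Definition Af k := normInf (E k.+1 - E k).

Lemma Esol k s : E k.+1 s 0 = (2 * E 0 s 0 + (k%:R + 1) * Dd k s) / (k%:R + 3).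
Proof.
have k0 : (0 : R) <= k%:R by rewrite ler0n.
rewrite -Erec; field; lra.
Qed.

Lemma Af0 : Af 0 <= 2 * e / 3.
Proof.
apply: normInf_le; first by have := e_ge0; lra.
move=> s; rewrite mxBE Esol ?mulr0n ?add0r.
have := E_abs 0 s; have := Dd_bound 0 s; rewrite !ler_norml => /andP[h1 h2] /andP[h3 h4].
apply/andP; split; lra.
Qed.

Lemma Frec_ent j s : (j%:R + 3) * (j%:R + 4) * (E j.+2 - E j.+1) s 0 =
  - 2 * E 0 s 0 + (j%:R + 2) * (j%:R + 3) * (Dd j.+1 s - Dd j s) + 2 * Dd j s.
Proof.
have k0 : (0 : R) <= j%:R by rewrite ler0n.
rewrite mxBE !Esol -!natr1; field; lra.
Qed.

Lemma F_step j : good j ->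
  (j%:R + 3) * (j%:R + 4) * Af j.+1 <= 4 * e + (j%:R + 2) * (j%:R + 3) * Af j.
Proof.
move=> gj.
have j0 : (0 : R) <= j%:R by rewrite ler0n.
have pos : (0 : R) < (j%:R + 3) * (j%:R + 4) by apply: mulr_gt0; lra.
rewrite mulrC -ler_pdivlMr //.
apply: normInf_le.
  apply: divr_ge0; last lra.
  have := e_ge0; have : 0 <= Af j by apply: normInf_ge0.
  move=> h1 h2; have : 0 <= (j%:R + 2) * (j%:R + 3) * Af j by apply: mulr_ge0 => //; nra.
  lra.
move=> s; rewrite ler_pdivlMr //.
rewrite -[X in `|_| * X]ger0_norm; last lra.
rewrite -normrM mulrC Frec_ent.
have hq := Dd_diff_good s gj.
have hE := E_abs 0 s; have hD := Dd_bound j s.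
have : `|(j%:R + 2) * (j%:R + 3) * (Dd j.+1 s - Dd j s)| <= (j%:R + 2) * (j%:R + 3) * Af j.
  rewrite normrM ger0_norm; last by apply: mulr_ge0; lra.
  by apply: ler_wpM2l => //; apply: mulr_ge0; lra.
move: hE hD; rewrite !ler_norml => /andP[h1 h2] /andP[h3 h4] /andP[h5 h6].
apply/andP; split; lra.
Qed.

Lemma F_crude j : (j%:R + 2) * (j%:R + 3) * Af j
   <= 4 * (j%:R + 1) * e + 2 * ((j%:R + 2) * (j%:R + 3) / 3) * normInf g.
Proof.
have j0 : (0 : R) <= j%:R by rewrite ler0n.
have hG := G_bound j.
have : Af j <= normInf (V j.+1 - V j) + normInf g / 3.
  apply: normInf_le.
    have := normInf_ge0 (V j.+1 - V j); have := normg_ge0; lra.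
  move=> s.
  have -> : (E j.+1 - E j) s 0 = (V j.+1 - V j) s 0 - g s 0 / 3.
    by rewrite (mxBE (E j.+1)) (mxBE (V j.+1)) !E_ent /cc -natr1; field.
  apply: le_trans (ler_normB _ _) _.
  have := normInf_ge (V j.+1 - V j) s; have := normInf_ge g s.
  rewrite normrM (@ger0_norm _ 3^-1) //; lra.
move=> H.
have : (j%:R + 2) * (j%:R + 3) * Af j <=
       (j%:R + 2) * (j%:R + 3) * (normInf (V j.+1 - V j) + normInf g / 3).
  by apply: ler_wpM2l => //; apply: mulr_ge0; lra.
lra.
Qed.

Lemma X_rec m d : (forall i, (m <= i < m + d)%N -> good i) ->
  ((m + d)%:R + 2) * ((m + d)%:R + 3) * Af (m + d)
    <= (m%:R + 2) * (m%:R + 3) * Af m + 4 * d%:R * e.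
Proof.
elim: d => [|d IH] H.
  by rewrite addn0 mulr0n mulr0 mul0r addr0.
have H' : forall i, (m <= i < m + d)%N -> good i.
  move=> i /andP[h1 h2]; apply: H; rewrite h1 /= addnS; exact: ltnW h2.
have IH' := IH H'.
have gd : good (m + d) by apply: H; rewrite leq_addr /= addnS ltnSn.
have := F_step gd.
rewrite addnS -!natr1 natrD; rewrite natrD in IH'.
lra.
Qed.

Lemma Res_ent j s : (j%:R + 3) * (T (V j.+1) s 0 - V j.+1 s 0 - g s 0)
  = 2 * (Dd j.+1 s - E 0 s 0) + (j%:R + 1) * (Dd j.+1 s - Dd j s).
Proof.
have k0 : (0 : R) <= j%:R by rewrite ler0n.
rewrite V_ent Esol !Dd_ent /cc -!natr1; field; lra.
Qed.

Definition Res k : 'cV[R]_n := T (V k) - V k - g.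

Lemma Res_crude : normInf (Res 1) <= 8 * e / 2.
Proof.
have e0 := e_ge0.
apply: normInf_le; first lra.
move=> s; rewrite /Res mxBE mxBE.
have H := Res_ent 0 s.
have := Dd_diff_crude 0 s; have := Dd_bound 1 s; have := E_abs 0 s.
rewrite !ler_norml => /andP[h1 h2] /andP[h3 h4] /andP[h5 h6].
apply/andP; split; lra.
Qed.

Lemma main_bound j m (B : R) : (m <= j)%N -> (forall i, (m <= i <= j)%N -> good i) ->
  (m%:R + 2) * (m%:R + 3) * Af m <= 4 * (m%:R + 1) * e + B -> 0 <= B ->
  normInf (Res j.+1) <= 8 * e / (j%:R + 2) + (j%:R + 1) * B / ((j%:R + 2) * (j%:R + 3) ^+ 2).
Proof.
move=> mj gd Hm B0.
have e0 := e_ge0.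
have j0 : (0 : R) <= j%:R by rewrite ler0n.
have Hj : (j%:R + 2) * (j%:R + 3) * Af j <= 4 * (j%:R + 1) * e + B.
  have gd' : forall i, (m <= i < m + (j - m))%N -> good i.
    move=> i /andP[h1 h2]; apply: gd; rewrite h1 /=; rewrite subnKC // in h2; exact: ltnW h2.
  have := @X_rec m (j - m) gd'.
  rewrite subnKC // natrB //.
  lra.
have gj : good j by apply: gd; rewrite mj leqnn.
have pos2 : (0 : R) < (j%:R + 2) * (j%:R + 3) by apply: mulr_gt0; lra.
have HA : Af j <= (4 * (j%:R + 1) * e + B) / ((j%:R + 2) * (j%:R + 3)).
  by rewrite ler_pdivlMr // mulrC.
set RHS := (X in _ <= X).
apply: normInf_le.
  rewrite /RHS; apply: addr_ge0; apply: divr_ge0.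
  - lra.
  - lra.
  - apply: mulr_ge0; lra.
  - apply: mulr_ge0; [lra| apply: exprn_ge0; lra].
move=> s; rewrite /Res mxBE mxBE.
have H := Res_ent j s.
have hq := Dd_diff_good s gj.
have hD := Dd_bound j.+1 s; have hE := E_abs 0 s.
have H3 : (j%:R + 3) * `|T (V j.+1) s 0 - V j.+1 s 0 - g s 0|
          <= 4 * e + (j%:R + 1) * Af j.
  rewrite -[X in X * `|_|]ger0_norm; last lra.
  rewrite -normrM H; apply: le_trans (ler_normD _ _) _.
  rewrite !normrM (@ger0_norm _ 2) // (ger0_norm (x := j%:R + 1)); last lra.
  have : (j%:R + 1) * `|Dd j.+1 s - Dd j s| <= (j%:R + 1) * Af j.
    by apply: ler_wpM2l => //; lra.
  have : `|Dd j.+1 s - E 0 s 0| <= 2 * e.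
    by apply: le_trans (ler_normB _ _) _; lra.
  lra.
set z := `|_| in H3.
have z0 : 0 <= z by apply: normr_ge0.
have a0' : 0 <= Af j by apply: normInf_ge0.
have s1 : (j%:R + 2) * (j%:R + 3) * ((j%:R + 3) * z) <= (j%:R + 2) * (j%:R + 3) * (4 * e + (j%:R + 1) * Af j).
  by apply: ler_wpM2l => //; lra.
have s2 : (j%:R + 1) * ((j%:R + 2) * (j%:R + 3) * Af j) <= (j%:R + 1) * (4 * (j%:R + 1) * e + B).
  by apply: ler_wpM2l => //; lra.
have ey : 0 <= e * j%:R by apply: mulr_ge0.
have s3 : (j%:R + 2) * (j%:R + 3) ^+ 2 * z <= 8 * e * (j%:R + 3) ^+ 2 + (j%:R + 1) * B.
  rewrite expr2; lra.
rewrite /RHS.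
have -> : 8 * e / (j%:R + 2) + (j%:R + 1) * B / ((j%:R + 2) * (j%:R + 3) ^+ 2)
   = (8 * e * (j%:R + 3) ^+ 2 + (j%:R + 1) * B) / ((j%:R + 2) * (j%:R + 3) ^+ 2).
  by field; lra.
rewrite ler_pdivlMr; last by apply: mulr_gt0; [lra | apply: exprn_gt0; lra].
by rewrite mulrC.
Qed.


Lemma final_allgood j : (forall i, good i) -> normInf (Res j.+1) <= 8 * e / (j%:R + 2).
Proof.
move=> ga.
have := Af0; have := e_ge0 => h1 h2.
have h3 : (0%:R + 2) * (0%:R + 3) * Af 0 <= 4 * (0%:R + 1) * e + 0 by lra.
have := @main_bound j 0 0 (leq0n j) (fun i _ => ga i) h3 (lexx 0).
by rewrite mulr0 mul0r addr0.
Qed.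

Lemma final_gen j (Kc u : R) : 0 <= u -> (forall i, u < i%:R -> good i) ->
  2 * u + 3/2 <= Kc -> Kc < j%:R + 1 ->
  normInf (Res j.+1) <= 8 * e / (j%:R + 2) + Kc / (j%:R + 2) * normInf g.
Proof.
move=> u0 gd hK hKj.
have e0 := e_ge0; have g0 := normg_ge0.
have j0 : (0 : R) <= j%:R by rewrite ler0n.
have K0 : 0 <= Kc by lra.
have t0 : 0 <= Kc / (j%:R + 2) * normInf g.
  by apply: mulr_ge0 => //; apply: divr_ge0; lra.
case: j j0 hKj t0 => [|j] j0 hKj t0.
  have := Res_crude; rewrite mulr0n add0r; lra.
have hju : u < j.+1%:R by rewrite -natr1; lra.
have := truncn_itv u0 => /andP[hm1 hm2].
set m := (Num.Def.trunc u).+1 in hm2.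
have mj : (m <= j.+1)%N.
  by rewrite /m -(ltr_nat R); apply: le_lt_trans hm1 hju.
have gdm : forall i, (m <= i <= j.+1)%N -> good i.
  move=> i /andP[h1 _]; apply: gd; apply: lt_le_trans hm2 _; by rewrite ler_nat.
pose B := 2 * ((m%:R + 2) * (m%:R + 3) / 3) * normInf g.
have B0 : 0 <= B by rewrite /B; apply: mulr_ge0 => //; apply: mulr_ge0 => //; apply: divr_ge0 => //; apply: mulr_ge0; rewrite ?ler0n; lra.
have := @main_bound j.+1 m B mj gdm (F_crude m) B0.
move=> H; apply: le_trans H _.
have hmu : m%:R <= u + 1 by rewrite /m -natr1; lra.
have m0 : (0 : R) <= m%:R by rewrite ler0n.
set J := j.+1%:R in hju hKj j0 t0 *.
apply: lerD => //.
have pos : 0 < (J + 2) * (J + 3) ^+ 2 by apply: mulr_gt0; [lra | apply: exprn_gt0; lra].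
have -> : Kc / (J + 2) * normInf g = (Kc * (J + 3) ^+ 2 * normInf g) / ((J + 2) * (J + 3) ^+ 2).
  by field; lra.
rewrite ler_pdivrMr // divfK; last by rewrite gt_eqF.
rewrite /B.
have a1 := arith1 u0 hK hKj j0.
have hm3 : (m%:R + 2) * (m%:R + 3) <= (u + 3) * (u + 4) by apply: ler_pM; lra.
have : 2/3 * (J+1) * ((m%:R + 2) * (m%:R + 3)) <= 2/3 * (J+1) * ((u + 3) * (u + 4)).
  by apply: ler_wpM2l => //; lra.
move=> h4.
have : 2/3 * (J+1) * ((m%:R + 2) * (m%:R + 3)) <= Kc * (J + 3) ^+ 2 by lra.
move=> h5.
have := ler_wpM2r g0 h5.
lra.
Qed.

Lemma eps_ge0 : (0%:E <= eps_gap P g)%E.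
Proof.
apply/ereal_infP => _ [pi _ <-]; rewrite lee_fin; exact: normInf_ge0.
Qed.

Lemma Ppi_g_fix k (pi : 'I_n -> A -> R) : is_policy pi -> Tpi P r pi (V k) = T (V k) ->
  good k -> Ppi P pi *m g = g.
Proof.
move=> hp hg gk; apply/matrixP => s j; rewrite (ord1 j).
rewrite Ppi_E -[RHS]mul1r; case: (hp) => _ p1; rewrite -(p1 s) mulr_suml.
apply: eq_bigr => a _.
case: (eqVneq (pi s a) 0) => [->|pa]; first by rewrite !mul0r.
congr (_ * _); apply: gk; exact: greedy_support hp hg pa.
Qed.

Theorem final (pik : nat -> 'I_n -> A -> R) :
  (forall k, is_policy (pik k) /\ Tpi P r (pik k) (V k) = T (V k)) ->
  forall k : nat, Kconst P r g h (V 0%N) < k%:R ->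
    normInf (g - gpi P r (pik k)) <= normInf (T (V k) - V k - g) /\
    normInf (T (V k) - V k - g)
      <= 8 / (k%:R + 1) * normInf (V 0%N - h)
         + Kconst P r g h (V 0%N) / (k%:R + 1) * normInf g.
Proof.
move=> Hpik k HK.
have e0 := e_ge0; have g0 := normg_ge0.
have rn0 : 0 <= rnorm r.
  rewrite /rnorm; elim/big_ind: _ => //= [x y hx hy | i _]; first by rewrite le_max hx.
  elim/big_ind: _ => //= x y hx hy; by rewrite le_max hx.
set Kc := Kconst P r g h (V 0%N) in HK *.
have [gk bound] : good k /\
   (normInf (Res k) <= 8 * e / (k%:R + 1) + Kc / (k%:R + 1) * normInf g).
  case Heps: (eps_gap P g) => [eps| |].
  - have [eps0 epsg] := eps_fin HP HB Heps.
    have KcE : Kc = (3 * rnorm r + 12 * e + 3 * normInf g) / eps.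
      by rewrite /Kc /Kconst Heps.
    pose u := 6 * e / eps.
    have u0 : 0 <= u by apply: divr_ge0; lra.
    have gd : forall i, u < i%:R -> good i.
      move=> i hi; apply: greedy_good => s a hd.
      have := eps_dev HB hd; rewrite Heps lee_fin => he.
      have hi' : 6 * e < i%:R * eps by rewrite -ltr_pdivrMr.
      have : cc i * eps <= cc i * (g s 0 - Pg s a) by apply: ler_wpM2l => //; exact: cc_ge0.
      rewrite /cc; lra.
    have hK2 : 2 * u + 3/2 <= Kc.
      rewrite KcE /u.
      have : 3 / 2 <= 3 * normInf g / eps by rewrite ler_pdivlMr //; lra.
      have : 3 * rnorm r / eps >= 0 by apply: divr_ge0; lra.
      have -> : (3 * rnorm r + 12 * e + 3 * normInf g) / eps
         = 3 * rnorm r / eps + 2 * (6 * e / eps) + 3 * normInf g / eps by field; lra.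
      lra.
    case: k HK => [|j] HK; first by have : (0 : R) <= 0%:R by []; lra.
    split.
      apply: gd; rewrite -natr1 in HK *; lra.
    have HK' : Kc < j%:R + 1 by rewrite natr1.
    have -> : (j.+1%:R + 1 : R) = j%:R + 2 by rewrite -natr1; lra.
    exact: final_gen u0 gd hK2 HK'.
  - have KcE : Kc = 0 by rewrite /Kc /Kconst Heps.
    have ga : forall i, good i.
      move=> i; apply: greedy_good => s a hd.
      by have := eps_dev HB hd; rewrite Heps.
    case: k HK => [|j] HK; first by rewrite KcE in HK; have : (0 : R) <= 0%:R by []; lra.
    split => //.
    have -> : (j.+1%:R + 1 : R) = j%:R + 2 by rewrite -natr1; lra.
    by rewrite KcE mul0r mul0r addr0; exact: final_allgood j ga.
  - by have := eps_ge0; rewrite Heps.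
split => //.
  case: (Hpik k) => hp hg.
  have XX := gpi_close HP hp (Ppi_g_fix hp hg gk) hg; exact XX.
apply: le_trans bound _.
rewrite /e; lra.
Qed.
End AVI.

End B5.
Import B5.

Unset Implicit Arguments. Set Strict Implicit.

Theorem theorem2 (R : realType) (n : nat) (A : finType) (a0 : A)
  (P : 'I_n -> A -> 'I_n -> R) (r : 'I_n -> A -> R)
  (g h : 'cV[R]_n) (V : nat -> 'cV[R]_n) (pik : nat -> 'I_n -> A -> R) :
  is_MDP P ->
  modified_bellman P r a0 g h ->
  (forall k, V k.+1 = lam R k.+1 *: V 0%N
                      + (1 - lam R k.+1) *: Topt P r a0 (V k)) ->
  (forall k, is_policy (pik k) /\ Tpi P r (pik k) (V k) = Topt P r a0 (V k)) ->
  forall k : nat, Kconst P r g h (V 0%N) < k%:R ->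
    normInf (g - gpi P r (pik k)) <= normInf (Topt P r a0 (V k) - V k - g) /\
    normInf (Topt P r a0 (V k) - V k - g)
      <= 8 / (k%:R + 1) * normInf (V 0%N - h)
         + Kconst P r g h (V 0%N) / (k%:R + 1) * normInf g.
Proof.
move=> HP HB HV Hpik.
exact: (final HP HB HV Hpik).
Qed.
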